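(* Let $k\ge1$ be an integer. The expected number of fixed points of the permutation obtained by performing a $k$-riffle shuffle on $n$ cards followed by reversing the order of the cards is \[ 1-\frac{1}{k}+\frac{1}{k^2}-\cdots+\frac{(-1)^{n-1}}{k^{n-1}}.\]
   Context: A $k$-riffle shuffle on $n$ cards: cut the deck into $k$ consecutive piles of sizes $j_1,\dots,j_k$ with probability $\binom{n}{j_1,\dots,j_k}/k^n$, then drop cards one at a time, each time from a pile chosen with probability proportional to its current size. Reversing the order of the cards replaces the resulting permutation $w$ by $w\circ w_0$, $w_0(i)=n+1-i$. *)

(* Defs.v *)
From mathcomp Require Import all_boot all_order all_algebra all_fingroup.
Set Implicit Arguments. Unset Strict Implicit. Unset Printing Implicit Defensive.
Import GRing.Theory Num.Theory.
Local Open Scope ring_scope.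

(* Cards and positions are indexed 0..n-1.  Before the shuffle the card with
   label c sits at position c.  A cut is given by pile sizes
   j : {ffun 'I_k -> 'I_n.+1} with \sum_i j i = n; pile i consists of the
   cards \sum_(i' < i) j i', ..., \sum_(i' <= i) j i' - 1 (in order).
   The dropping process fills the positions 0, 1, ..., n-1 of the new deck
   in this order; f t : 'I_k records from which pile the card placed at
   position t was taken (each pile gives its cards in order). *)

Definition cut_prob (k n : nat) (j : {ffun 'I_k -> 'I_n.+1}) : rat :=
  if (\sum_(i < k) (j i : nat) == n)%N then
    (n`!)%:R / (\prod_(i < k) ((j i)`!)%:R) / (k%:R ^+ n)
  else 0.

Definition taken (k n : nat) (f : {ffun 'I_n -> 'I_k}) (t : 'I_n) : nat :=
  #|[set q : 'I_n | (q < t)%N && (f q == f t)]|.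

(* probability that the dropping sequence is f, given the cut j: at step t
   the pile f t is chosen with probability (its current size)/(total
   number of remaining cards) = (j (f t) - taken f t) / (n - t). *)
Definition drop_prob (k n : nat) (j : {ffun 'I_k -> 'I_n.+1})
    (f : {ffun 'I_n -> 'I_k}) : rat :=
  \prod_(t < n) (((j (f t) : nat) - taken f t)%N%:R / (n - t)%N%:R).

Definition card_at (k n : nat) (j : {ffun 'I_k -> 'I_n.+1})
    (f : {ffun 'I_n -> 'I_k}) (t : 'I_n) : nat :=
  (\sum_(i < k | (i < f t)%N) (j i : nat) + taken f t)%N.

(* probability that a k-riffle shuffle of n cards produces the permutation
   w (w t = label of the card at position t after the shuffle) *)
Definition riffle_prob (k n : nat) (w : 'S_n) : rat :=
  \sum_(j : {ffun 'I_k -> 'I_n.+1}) \sum_(f : {ffun 'I_n -> 'I_k})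
    cut_prob j * drop_prob j f *
    (if [forall t, card_at j f t == (w t : nat)] then 1 else 0).

Definition w0 (n : nat) : 'S_n := perm (@rev_ord_inj n).

Definition nfix (n : nat) (s : 'S_n) : nat := #|[set i | s i == i]|.

(* Main.v *)
Require Import Defs.
From mathcomp Require Import all_boot all_order all_algebra all_fingroup.
From mathcomp Require Import zify ring lra.
Set Implicit Arguments. Unset Strict Implicit. Unset Printing Implicit Defensive.
Import GRing.Theory Num.Theory.

Fixpoint W (k n : nat) : seq (seq 'I_k) :=
  if n is n'.+1 then [seq x :: w | x <- index_enum 'I_k, w <- W k n'] else [:: [::]].

Lemma sumWS k n (F : seq 'I_k -> nat) :
  \sum_(w <- W k n.+1) F w = \sum_(x < k) \sum_(w <- W k n) F (x :: w).
Proof. by rewrite /= big_allpairs_dep. Qed.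

Lemma sumW0 k (F : seq 'I_k -> nat) : \sum_(w <- W k 0) F w = F [::].
Proof. by rewrite /= big_seq1. Qed.

Lemma split_sum k (x0 : 'I_k) t q (G : seq 'I_k -> 'I_k -> seq 'I_k -> nat) :
  \sum_(w <- W k (t + q.+1)) G (take t w) (nth x0 w t) (drop t.+1 w)
  = \sum_(L <- W k t) \sum_(a < k) \sum_(R <- W k q) G L a R.
Proof.
elim: t G => [|t IH] G.
  rewrite add0n sumWS sumW0; apply: eq_bigr => a _; apply: eq_bigr => R _ /=; by rewrite drop0.
rewrite addSn sumWS sumWS; apply: eq_bigr => x _.
exact: (IH (fun L => G (x :: L))).
Qed.

Lemma sum_if_lt k c A B :
  \sum_(x < k) (if x < c then A else B) = minn c k * A + (k - minn c k) * B.
Proof.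
elim: k => [|k IH]; first by rewrite big_ord0 minn0.
rewrite big_ord_recr /= IH.
idtac.
case: (ltnP k c) => h.
  have -> : minn c k.+1 = k.+1 by lia.
  rewrite !subnn; nia.
have -> : minn c k.+1 = c by lia.
have -> : k.+1 - c = (k - c).+1 by lia.
nia.
Qed.

Lemma sum_if_le k (a : 'I_k) A B :
  \sum_(x < k) (if x <= a then A else B) = a.+1 * A + (k - a.+1) * B.
Proof.
rewrite (sum_if_lt k a.+1); have -> : minn a.+1 k = a.+1 by move: (ltn_ord a); lia. by [].
Qed.

Lemma sum_if_ge k (a : 'I_k) A B :
  \sum_(x < k) (if a <= x then A else B) = (k - a) * A + a * B.
Proof.
under eq_bigr => x _ do rewrite leqNgt if_neg.
rewrite (sum_if_lt k a); have -> : minn a k = a by move: (ltn_ord a); lia. by rewrite addnC.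
Qed.

Section NX.
Variables (k : nat) (a : 'I_k).
Definition cl (L : seq 'I_k) := count (fun x : 'I_k => x <= a) L.
Definition cr (R : seq 'I_k) := count (fun x : 'I_k => a <= x) R.
Definition N p q := \sum_(L <- W k p) \sum_(R <- W k q) (cl L == cr R : nat).
Definition X p q := \sum_(L <- W k p) \sum_(R <- W k q) ((cl L).+1 == cr R : nat).

Lemma N_Sp p q : N p.+1 q = (k - a.+1) * N p q + a.+1 * X p q.
Proof.
rewrite /N sumWS.
transitivity (\sum_(x < k) (if x <= a then X p q else N p q)).
  apply: eq_bigr => x _; rewrite /X /cl /=.
  by case: (x <= a) => //; apply: eq_bigr => L _; apply: eq_bigr => R _.
by rewrite sum_if_le addnC.
Qed.

Lemma X_Sq p q : X p q.+1 = a * X p q + (k - a) * N p q.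
Proof.
rewrite {1}/X; under eq_bigr => L _ do rewrite sumWS.
rewrite exchange_big /=.
transitivity (\sum_(y < k) (if a <= y then N p q else X p q)).
  apply: eq_bigr => y _; rewrite /N /X /cr /=.
  case: (a <= y) => //; apply: eq_bigr => L _; apply: eq_bigr => R _.
by rewrite sum_if_ge addnC.
Qed.

Lemma N_0q q : N 0 q = a ^ q.
Proof.
elim: q => [|q IH]; first by rewrite /N !sumW0.
rewrite /N sumW0 sumWS.
transitivity (\sum_(y < k) (if a <= y then 0 else N 0 q)).
  apply: eq_bigr => y _; rewrite /N sumW0 /cr /=.
  by case: (a <= y) => //; rewrite big1.
by rewrite sum_if_ge muln0 add0n IH expnS.
Qed.

Lemma X_p0 p : X p 0 = 0.
Proof. by rewrite /X; apply: big1 => L _; rewrite sumW0. Qed.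

Lemma N_p0 p : N p 0 = (k - a.+1) ^ p.
Proof.
elim: p => [|p IH]; first by rewrite /N !sumW0.
by rewrite N_Sp X_p0 IH muln0 addn0 expnS.
Qed.

Lemma N_SS p q : N p.+1 q.+1 = (k - a.+1) * N p q.+1 + a * N p.+1 q + k * N p q.
Proof.
rewrite N_Sp X_Sq N_Sp.
have ha := ltn_ord a.
have -> : k - a = (k - a.+1).+1 by lia.
have hk : k = a + (k - a.+1) + 1 by lia.
move: hk; generalize (k - a.+1) (nat_of_ord a) (N p q) (X p q) => b A n x ->.
nia.
Qed.

Definition S m := \sum_(p < m.+1) N p (m - p).

Lemma S_SS m : S m.+2 = (a + (k - a.+1)) * S m.+1 + k * S m.
Proof.
have e1 : S m.+1 = \sum_(p < m.+1) N p (m - p).+1 + N m.+1 0.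
  rewrite /S big_ord_recr /= subnn; congr (_ + _).
  by apply: eq_bigr => p _; rewrite subSn // -ltnS.
have e2 : S m.+1 = N 0 m.+1 + \sum_(p < m.+1) N p.+1 (m - p).
  by rewrite /S big_ord_recl /= subn0.
rewrite {1}/S big_ord_recl subn0 big_ord_recr /=.
have -> : \sum_(i < m.+1) N (bump 0 i) (m.+2 - bump 0 i)
   = \sum_(p < m.+1) N p.+1 (m - p).+1.
  by apply: eq_bigr => p _; rewrite /bump /= add1n subSS subSn // -ltnS.
rewrite /bump /= add1n subnn.
under eq_bigr => p _ do rewrite N_SS.
rewrite !big_split /= -!big_distrr /= -/(S m).
have h1 : N 0 m.+2 = a * N 0 m.+1 by rewrite !N_0q expnS.
have h2 : N m.+2 0 = (k - a.+1) * N m.+1 0 by rewrite !N_p0 expnS.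
rewrite h1 h2.
have ha := ltn_ord a.
have hk : k = a + (k - a.+1) + 1 by lia.
set P1 := \sum_(p < m.+1) N p (m - p).+1 in e1 e2 *.
set P2 := \sum_(p < m.+1) N p.+1 (m - p) in e1 e2 *.
set b := k - a.+1 in hk *.
set s1 := S m.+1 in e1 e2 *.
set n0 := N 0 m.+1 in e1 e2 *.
set n1 := N m.+1 0 in e1 e2 *.
set s0 := S m.
clearbody P1 P2 b s1 n0 n1 s0.
rewrite e1 in e2 *.
rewrite mulnDl e2 !mulnDr; lia.
Qed.

Lemma S_0 : S 0 = 1.
Proof. by rewrite /S big_ord1 N_0q. Qed.

Lemma S_1 : S 1 = a + (k - a.+1).
Proof. by rewrite /S big_ord_recr big_ord1 /= N_0q N_p0 !expn1. Qed.

Lemma S_rec m : S m.+1 + S m = k ^ m.+1.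
Proof.
have ha := ltn_ord a.
have hk : k = a + (k - a.+1) + 1 by lia.
elim: m => [|m IH]; first by rewrite S_1 S_0 expn1; lia.
rewrite S_SS expnS -IH.
move: hk; generalize (S m.+1) (S m) (k - a.+1) (nat_of_ord a) => x y b A ->.
nia.
Qed.
End NX.

Local Open Scope ring_scope.
Lemma S_closed k (a : 'I_k) m :
  (S a m)%:R = \sum_(i < m.+1) (-1) ^+ i * (k%:R) ^+ (m - i) :> rat.
Proof.
elim: m => [|m IH]; first by rewrite S_0 big_ord1.
have e : (S a m.+1)%:R = (k%:R ^+ m.+1 - (S a m)%:R :> rat).
  by rewrite -natrX -(S_rec a m) natrD addrK.
rewrite e IH [RHS]big_ord_recl expr0 mul1r subn0.
congr (_ + _); rewrite -sumrN; apply: eq_bigr => i _.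
by rewrite lift0 subSS exprS mulN1r mulNr.
Qed.
Local Close Scope ring_scope.

Definition wf k n (f : {ffun 'I_n -> 'I_k}) : seq 'I_k := [seq f i | i <- enum 'I_n].

Lemma size_wf k n (f : {ffun 'I_n -> 'I_k}) : size (wf f) = n.
Proof. by rewrite size_map size_enum_ord. Qed.

Lemma nth_wf k n (f : {ffun 'I_n -> 'I_k}) x0 (i : 'I_n) : nth x0 (wf f) i = f i.
Proof.
by rewrite (nth_map i) ?nth_ord_enum // size_enum_ord.
Qed.

Lemma mem_W k n (w : seq 'I_k) : (w \in W k n) = (size w == n).
Proof.
elim: n w => [|n IH] w /=; first by rewrite inE; case: w.
apply/allpairsPdep/idP => [[x [w' [_ hw' ->]]] | ].
  by rewrite /= eqSS -IH.
case: w => // x w; rewrite /= eqSS -IH => h.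
by exists x, w; rewrite mem_index_enum.
Qed.

Lemma uniq_W k n : uniq (W k n).
Proof.
elim: n => [|n IH] //=.
apply: allpairs_uniq_dep => //; first exact: index_enum_uniq.
by move=> [x1 w1] [x2 w2] _ _ /= [-> ->].
Qed.

Lemma sum_ffun_W k n (x0 : 'I_k) (G : seq 'I_k -> nat) :
  \sum_(f : {ffun 'I_n -> 'I_k}) G (wf f) = \sum_(w <- W k n) G w.
Proof.
rewrite -(big_map (@wf k n) xpredT G).
apply: perm_big; apply: uniq_perm.
- rewrite map_inj_uniq ?index_enum_uniq // => f g e.
  by apply/ffunP => i; rewrite -(nth_wf f x0) -(nth_wf g x0) e.
- exact: uniq_W.
move=> w; rewrite mem_W; apply/mapP/idP => [[f _ ->] | /eqP hw].
  by rewrite size_wf.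
exists [ffun i : 'I_n => nth x0 w i]; first by rewrite mem_index_enum.
apply: (@eq_from_nth _ x0); first by rewrite size_wf.
move=> i; rewrite hw => hi.
by rewrite (nth_wf _ x0 (Ordinal hi)) ffunE.
Qed.

Definition condW k (x0 : 'I_k) (w : seq 'I_k) t : bool :=
  count (fun x : 'I_k => x <= nth x0 w t) (take t w)
  == count (fun x : 'I_k => nth x0 w t <= x) (drop t.+1 w).

Lemma sumW_cond k (x0 : 'I_k) n t : t < n ->
  \sum_(w <- W k n) (condW x0 w t : nat) = \sum_(a < k) N a t (n - t.+1).
Proof.
move=> htn.
have e : n = t + (n - t.+1).+1 by lia.
rewrite [in LHS]e (split_sum x0 t (n - t.+1)
  (fun L a R => (count (fun x : 'I_k => x <= a) L == count (fun x : 'I_k => a <= x) R) : nat)).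
by rewrite exchange_big.
Qed.

Lemma total_sum k n (x0 : 'I_k) m : n = m.+1 ->
  \sum_(f : {ffun 'I_n -> 'I_k}) \sum_(t < n) (condW x0 (wf f) t : nat)
  = \sum_(a < k) S a m.
Proof.
move=> hn; rewrite exchange_big /=.
under eq_bigr => t _ do rewrite (sum_ffun_W n x0 (fun w => condW x0 w t)) (sumW_cond x0 (ltn_ord t)).
rewrite exchange_big /=; apply: eq_bigr => a _.
rewrite /S; subst n.
by apply: eq_bigr => t _; rewrite subSS.
Qed.


Lemma card_sum (T : finType) (P : pred T) : #|[set x | P x]| = \sum_x (P x : nat).
Proof. by rewrite -sum1dep_card big_mkcond; apply: eq_bigr => x _; case: (P x). Qed.

Lemma count_take (T : Type) (x0 : T) (P : pred T) (s : seq T) n t :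
  size s = n -> count P (take t s) = \sum_(q < n) ((q < t) && P (nth x0 s q) : nat).
Proof.
elim: s n t => [|x s IH] n t /= <-; first by rewrite big_ord0.
rewrite big_ord_recl /=; case: t => [|t] /=.
  by rewrite big1.
by rewrite (IH _ t erefl).
Qed.

Lemma count_all (T : Type) (x0 : T) (P : pred T) (s : seq T) n :
  size s = n -> count P s = \sum_(q < n) (P (nth x0 s q) : nat).
Proof.
elim: s n => [|x s IH] n /= <-; first by rewrite big_ord0.
by rewrite big_ord_recl /= (IH _ erefl).
Qed.

Lemma count_drop (T : Type) (x0 : T) (P : pred T) (s : seq T) n t :
  size s = n -> count P (drop t s) = \sum_(q < n) ((t <= q) && P (nth x0 s q) : nat).
Proof.
elim: s n t => [|x s IH] n t /= <-; first by rewrite big_ord0.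
rewrite big_ord_recl /=; case: t => [|t] /=.
  by rewrite (count_all x0 P (erefl (size s))).
by rewrite (IH _ t erefl).
Qed.

Lemma prod_den n : \prod_(t < n) (n - t) = n`!.
Proof.
elim: n => [|n IH]; first by rewrite big_ord0.
by rewrite big_ord_recl subn0 factS -IH.
Qed.

Lemma prod_pile n (P : pred 'I_n) J :
  \prod_(t < n | P t) (J - #|[set q : 'I_n | (q < t) && P q]|) = J ^_ #|[set t | P t]|.
Proof.
suff H : forall m, m <= n ->
  \prod_(t < n | (t < m) && P t) (J - #|[set q : 'I_n | (q < t) && P q]|)
  = J ^_ (\sum_(t < n) ((t < m) && P t : nat)).
  have e1 : \sum_(t < n) ((t < n) && P t : nat) = \sum_(t < n) (P t : nat).
    by apply: eq_bigr => t _; rewrite ltn_ord.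
  rewrite card_sum -e1 -(H n (leqnn n)); apply: eq_bigl => t; by rewrite ltn_ord.
elim=> [|m IH] hm.
  by rewrite big_pred0 // big1.
have hmn : m < n by [].
set tm := Ordinal hmn.
case hP : (P tm).
  rewrite (bigD1 tm) /=; last by apply/andP; split; [apply: ltnSn | exact: hP].
  have -> : \sum_(t < n) ((t < m.+1) && P t : nat) = (\sum_(t < n) ((t < m) && P t : nat)).+1.
    rewrite (bigD1 tm) /=; last by [].
    have -> : (tm < m.+1) && P tm = true by apply/andP; split; [apply: ltnSn | exact: hP].
    rewrite add1n; congr _.+1.
    rewrite [RHS](bigD1 tm) //= ltnn /= add0n.
    apply: eq_bigr => t ht; rewrite ltnS leq_eqVlt.
    by have -> : (nat_of_ord t == m) = false by apply/negbTE; move: ht; apply: contra => /eqP e; apply/eqP/val_inj.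
  rewrite ffactnSr -IH ?(ltnW hm) // card_sum mulnC; congr (_ * _).
  apply: eq_bigl => t; rewrite ltnS leq_eqVlt.
  case: (ltngtP t m) => [h|h|h] /=; rewrite ?andbF ?andbT //.
    have -> : (t != tm) by apply/eqP => e; move: h; rewrite e /= ltnn.
    by rewrite andbT.
  have et : t = tm by apply: val_inj.
  by rewrite et eqxx andbF.
have e : \sum_(t < n) ((t < m.+1) && P t : nat) = \sum_(t < n) ((t < m) && P t : nat).
  apply: eq_bigr => t _; rewrite ltnS leq_eqVlt.
  case: (ltngtP t m) => [h|h|h] //=; have et : t = tm by apply: val_inj.
  by rewrite et hP.
rewrite e -IH ?(ltnW hm) //; apply: eq_bigl => t; rewrite ltnS leq_eqVlt.
case: (ltngtP t m) => [h|h|h] //=; have et : t = tm by apply: val_inj.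
by rewrite et hP.
Qed.

Section Cnt.
Variables (k n : nat).
Implicit Type f : {ffun 'I_n -> 'I_k}.

Definition cntn f (i : 'I_k) := #|[set t : 'I_n | f t == i]|.
Definition cnt f : {ffun 'I_k -> 'I_n.+1} := [ffun i => inord (cntn f i)].

Lemma cntn_le f i : cntn f i <= n.
Proof. by rewrite /cntn (leq_trans (max_card _)) ?card_ord. Qed.

Lemma cnt_val f i : (cnt f i : nat) = cntn f i.
Proof. by rewrite ffunE inordK // ltnS cntn_le. Qed.

Lemma cntn_sum f : \sum_(i < k) cntn f i = n.
Proof.
rewrite /cntn; under eq_bigr => i _ do rewrite card_sum.
rewrite exchange_big /=.
rewrite -[n in RHS]card_ord -sum1_card; apply: eq_bigr => t _.
rewrite (bigD1 (f t)) //= eqxx big1 // => i hi.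
by rewrite eq_sym (negbTE hi).
Qed.

Lemma prod_num (j : {ffun 'I_k -> 'I_n.+1}) f :
  \prod_(t < n) ((j (f t) : nat) - taken f t) = \prod_(i < k) (j i : nat) ^_ (cntn f i).
Proof.
rewrite (partition_big f xpredT) //=; apply: eq_bigr => i _.
rewrite /cntn -prod_pile; apply: eq_bigr => t /eqP ht.
rewrite /taken ht; congr (_ - #|_|); apply/setP => q; by rewrite !inE.
Qed.

Lemma drop_probE (j : {ffun 'I_k -> 'I_n.+1}) f :
  drop_prob j f = ((\prod_(i < k) (j i : nat) ^_ (cntn f i))%:R / (n`!)%:R)%R.
Proof.
by rewrite /drop_prob prodf_div -!natr_prod prod_num prod_den.
Qed.
End Cnt.

Lemma sum_eq_le (I : finType) (x y : I -> nat) :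
  (forall i, x i <= y i) -> \sum_i x i = \sum_i y i -> forall i, x i = y i.
Proof.
move=> hle hs i; apply/eqP; rewrite eqn_leq hle /=; rewrite leqNgt; apply/negP => hlt.
move: hs; rewrite (bigD1 i) //= [in RHS](bigD1 i) //=.
have := @leq_sum _ (index_enum I) (fun l => l != i) x y (fun l _ => hle l); lia.
Qed.

Lemma cut_drop k n (hk : 0 < k) (j : {ffun 'I_k -> 'I_n.+1}) (f : {ffun 'I_n -> 'I_k}) :
  (cut_prob j * drop_prob j f = if j == cnt f then (k%:R ^+ n)^-1 else 0)%R.
Proof.
rewrite drop_probE /cut_prob.
have [-> | hne] := eqVneq j (cnt f).
  have -> : \sum_(i < k) (cnt f i : nat) = n.
    by rewrite (eq_bigr _ (fun i _ => cnt_val f i)) cntn_sum.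
  rewrite eqxx.
  have -> : \prod_(i < k) (cnt f i : nat) ^_ (cntn f i) = \prod_(i < k) (cnt f i)`!.
    by apply: eq_bigr => i _; rewrite cnt_val ffactnn.
  have h1 : ((n`!)%:R : rat) != 0%R by rewrite pnatr_eq0 -lt0n fact_gt0.
  have h2 : ((\prod_(i < k) (cnt f i)`!)%:R : rat) != 0%R.
    by rewrite pnatr_eq0 -lt0n prodn_gt0 // => i; rewrite fact_gt0.
  rewrite natr_prod in h2 *.
  have h3 : (k%:R ^+ n : rat) != 0%R by rewrite expf_eq0 pnatr_eq0 eqn0Ngt hk andbF.
  by field; rewrite h1 h2 h3.
case: eqP => hs; last by rewrite mul0r.
case: (pickP (fun i => (j i : nat) < cntn f i)) => [i hi | hnone].
  have -> : \prod_(i < k) (j i : nat) ^_ (cntn f i) = 0 by rewrite (bigD1 i) //= ffact_small.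
  by rewrite mul0r mulr0.
exfalso; move/eqP: hne; apply; apply/ffunP => i; apply: val_inj; rewrite /= cnt_val.
have H := @sum_eq_le _ (cntn f) (fun i => j i : nat).
symmetry; apply: H => [l|]; first by move: (hnone l) => /negbT; rewrite -leqNgt.
by rewrite cntn_sum.
Qed.

Section Rank.
Variables (k n : nat) (f : {ffun 'I_n -> 'I_k}).

Definition lexlt (s t : 'I_n) : bool := (f s < f t) || ((s < t) && (f s == f t)).
Definition rk (t : 'I_n) : nat := \sum_(s < n) (lexlt s t : nat).

Lemma lexltE s t : lexlt s t = (f s * n + s < f t * n + t).
Proof.
have hs := ltn_ord s; have ht := ltn_ord t.
rewrite /lexlt; case: (ltngtP (f s) (f t)) => h /=.
- symmetry; apply/idP; nia.
- have -> : (f s == f t) = false by apply/negbTE/eqP => e; move: h; rewrite e ltnn.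
  rewrite andbF; symmetry; apply/negbTE; rewrite -leqNgt; nia.
- have -> : f s == f t by apply/eqP/val_inj.
  rewrite h andbT; lia.
Qed.

Lemma card_at_rk t : card_at (cnt f) f t = rk t.
Proof.
rewrite /card_at /taken card_sum.
have -> : \sum_(i < k | i < f t) (cnt f i : nat) = \sum_(s < n) (f s < f t : nat).
  under eq_bigr => i _ do rewrite cnt_val /cntn card_sum.
  rewrite exchange_big /=; apply: eq_bigr => s _.
  rewrite big_mkcond /= (bigD1 (f s)) //= eqxx big1 ?addn0; first by case: (f s < f t).
  by move=> i hi; rewrite eq_sym (negbTE hi); case: (i < f t).
rewrite -big_split /=; apply: eq_bigr => s _; rewrite /lexlt.
case: (ltngtP (f s) (f t)) => h //=.
  have -> : (f s == f t) = false by apply/negbTE/eqP => e; move: h; rewrite e ltnn.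
  by rewrite andbF.
Qed.

Lemma rk_lt t : rk t < n.
Proof.
have h1 : \sum_(s < n) ((lexlt s t : nat) + (s == t : nat)) <= \sum_(s < n) 1.
  apply: leq_sum => s _; rewrite lexltE.
  case: eqP => [->|]; last by case: (_ < _).
  by rewrite ltnn.
have h2 : \sum_(s < n) (s == t : nat) = 1.
  by rewrite (bigD1 t) //= eqxx big1 // => s /negbTE ->.
have h3 : \sum_(s < n) 1 = n by rewrite sum_nat_const card_ord muln1.
by move: h1; rewrite big_split /= h2 h3 /rk addn1.
Qed.

Lemma rk_inj : injective (fun t => Ordinal (rk_lt t)).
Proof.
have key : forall s t, lexlt s t -> rk s < rk t.
  move=> s t hst; rewrite /rk (bigD1 s) //= [X in _ < X](bigD1 s) //= hst.
  have -> : lexlt s s = false by rewrite lexltE ltnn.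
  rewrite add0n add1n ltnS; apply: leq_sum => q _.
  case hq: (lexlt q s) => //=; move: hq hst; rewrite !lexltE => h1 h2.
  suff -> : f q * n + q < f t * n + t by [].
  exact: ltn_trans h1 h2.
move=> s t /(congr1 val) /= e.
case: (eqVneq s t) => // hne; exfalso.
have : lexlt s t || lexlt t s.
  rewrite !lexltE.
  case: (ltngtP (f s * n + s) (f t * n + t)) => // h.
  move/negP: hne; case; apply/eqP; apply: val_inj; rewrite /=.
  have hs := ltn_ord s; have ht := ltn_ord t.
  case: (ltngtP (f s) (f t)) => h'.
  - have : (f s).+1 * n <= f t * n by rewrite leq_mul2r h' orbT.
    rewrite mulSn; lia.
  - have : (f t).+1 * n <= f s * n by rewrite leq_mul2r h' orbT.
    rewrite mulSn; lia.
  - move: h; rewrite h' /=; lia.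
by case/orP => /key; rewrite e ltnn.
Qed.

Definition rkp : 'S_n := perm rk_inj.

End Rank.

Lemma rk_cond k n (x0 : 'I_k) (f : {ffun 'I_n -> 'I_k}) (t : 'I_n) :
  (rk f t == n - t.+1) = condW x0 (wf f) t.
Proof.
rewrite /condW nth_wf (count_take x0 _ _ (size_wf f)) (count_drop x0 _ _ (size_wf f)).
have hA : rk f t = \sum_(q < n) (((q < t) && (f q <= f t)) + ((t < q) && (f q < f t)) : nat).
  apply: eq_bigr => q _; rewrite lexltE.
  have hs := ltn_ord q; have ht := ltn_ord t.
  case: (ltngtP q t) => h /=.
  - have -> : (f q * n + q < f t * n + t) = (f q <= f t).
      apply/idP/idP => h2.
        rewrite leqNgt; apply/negP => h3.
        have : (f t).+1 * n <= f q * n by rewrite leq_mul2r h3 orbT.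
        rewrite mulSn; lia.
      have : f q * n <= f t * n by rewrite leq_mul2r h2 orbT.
      lia.
    by rewrite addn0.
  - have -> : (f q * n + q < f t * n + t) = (f q < f t).
      apply/idP/idP => h2.
        rewrite ltnNge; apply/negP => h3.
        have : f t * n <= f q * n by rewrite leq_mul2r h3 orbT.
        lia.
      have : (f q).+1 * n <= f t * n by rewrite leq_mul2r h2 orbT.
      rewrite mulSn; lia.
    by [].
  - have e : q = t :> 'I_n by apply: val_inj.
    by rewrite e ltnn.
have hB : n - t.+1 = \sum_(q < n) (((t < q) && (f t <= f q)) + ((t < q) && (f q < f t)) : nat).
  have hsz : n - t.+1 = count predT (drop t.+1 (wf f)) by rewrite count_predT size_drop size_wf.
  rewrite hsz (count_drop x0 predT _ (size_wf f)).
  apply: eq_bigr => q _; rewrite nth_wf /= andbT.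
  by case: (t < q) => //=; rewrite ltnNge; case: (f t <= f q).
have e1 : \sum_(q < n) ((q < t) && (nth x0 (wf f) q <= f t) : nat)
  = \sum_(q < n) ((q < t) && (f q <= f t) : nat).
  by apply: eq_bigr => q _; rewrite nth_wf.
have e2 : \sum_(q < n) ((t < q) && (f t <= nth x0 (wf f) q) : nat)
  = \sum_(q < n) ((t < q) && (f t <= f q) : nat).
  by apply: eq_bigr => q _; rewrite nth_wf.
by rewrite e1 e2 hA hB !big_split /= eqn_add2r.
Qed.

Lemma nfix_rkp k n (f : {ffun 'I_n -> 'I_k}) :
  nfix (w0 n * rkp f)%g = \sum_(t < n) (rk f t == n - t.+1 : nat).
Proof.
rewrite /nfix card_sum (reindex_inj rev_ord_inj) /=.
apply: eq_bigr => i _.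
rewrite permM /w0 !permE -val_eqE /=.
by rewrite rev_ordK.
Qed.

Local Open Scope ring_scope.

Lemma ind_sum k n (f : {ffun 'I_n -> 'I_k}) :
  \sum_(w : 'S_n) ((if [forall t, card_at (cnt f) f t == w t] then 1 else 0)
     * (nfix (w0 n * w)%g)%:R) = (nfix (w0 n * rkp f)%g)%:R :> rat.
Proof.
rewrite (bigD1 (rkp f)) //=.
have -> : [forall t, card_at (cnt f) f t == rkp f t].
  by apply/forallP => t; rewrite card_at_rk /rkp permE.
rewrite mul1r big1 ?addr0 // => w hw.
case: ifP => [/forallP H | _]; last by rewrite mul0r.
exfalso; move/eqP: hw; apply; apply/permP => t; apply: val_inj.
by rewrite /rkp permE /= -card_at_rk; apply/eqP; rewrite eq_sym H.
Qed.

Lemma main_reduce k n (hk : (0 < k)%N) (x0 : 'I_k) :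
  \sum_(w : 'S_n) riffle_prob k w * (nfix (w0 n * w)%g)%:R
  = (k%:R ^+ n)^-1 * (\sum_(f : {ffun 'I_n -> 'I_k}) \sum_(t < n) (condW x0 (wf f) t : nat))%:R :> rat.
Proof.
rewrite /riffle_prob.
have E : forall (A : {ffun 'I_k -> 'I_n.+1} -> {ffun 'I_n -> 'I_k} -> rat) c,
  (\sum_j \sum_f A j f) * c = \sum_j \sum_f (A j f * c).
  by move=> A c; rewrite mulr_suml; apply: eq_bigr => j _; rewrite mulr_suml.
under eq_bigr => w _ do rewrite E.
rewrite exchange_big /=.
under eq_bigr => j _ do rewrite exchange_big /=.
rewrite exchange_big /=.
under eq_bigr => f _ do under eq_bigr => j _ do under eq_bigr => w _ do rewrite -!mulrA mulrA cut_drop //.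
rewrite natr_sum mulr_sumr; apply: eq_bigr => f _.
rewrite (bigD1 (cnt f)) //= eqxx [X in _ + X]big1 ?addr0; last first.
  by move=> j /negbTE ->; apply: big1 => w _; rewrite mul0r.
rewrite -mulr_sumr ind_sum nfix_rkp; congr (_ * _%:R).
by apply: eq_bigr => t _; rewrite (rk_cond x0).
Qed.

Theorem corollary4p2 (k n : nat) (hk : (1 <= k)%N) :
  \sum_(w : 'S_n) riffle_prob k w * (nfix (w0 n * w)%g)%:R
  = \sum_(i < n) (-1) ^+ i / (k%:R ^+ i) :> rat.
Proof.
pose x0 : 'I_k := Ordinal hk.
rewrite (main_reduce n hk x0).
case: n => [|m].
  by rewrite !big_ord0 big1 ?mulr0 // => f _; rewrite big_ord0.
rewrite (@total_sum k m.+1 x0 m erefl) natr_sum.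
under eq_bigr => a _ do rewrite S_closed.
rewrite sumr_const card_ord -[X in _ * X]mulr_natl mulrA mulr_sumr.
apply: eq_bigr => i _.
have hkz : (k%:R : rat) != 0 by rewrite pnatr_eq0 eqn0Ngt hk.
have hi : (i <= m)%N by rewrite -ltnS.
have e : (k%:R : rat) ^+ m.+1 = k%:R ^+ (m - i) * k%:R * k%:R ^+ i.
  by rewrite -exprSr -exprD; congr (_ ^+ _); lia.
rewrite e; field.
by rewrite hkz !expf_neq0.
Qed.
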